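(* Let $n,m,T$ be positive integers, $\epsilon\ge 0$, and let $x(0),\dots,x(T)\in\mathbb{R}^n$ and $u(0),\dots,u(T-1)\in\mathbb{R}^m$ be given data. For $i\in\{0,\dots,T-1\}$ let $$\mathcal{C}_i:=\{(A,B)\in\mathbb{R}^{n\times n}\times\mathbb{R}^{n\times m}:\ \exists d\in\mathbb{R}^n \text{ with } x(i+1)=Ax(i)+Bu(i)+d,\ dd^\top\preceq\epsilon I\},$$ and $\mathcal{I}:=\bigcap_{i=0}^{T-1}\mathcal{C}_i$. Suppose there exist $P\in\mathbb{R}^{n\times n}$ symmetric, $Y\in\mathbb{R}^{m\times n}$, and scalars $\beta,\tau_0,\dots,\tau_{T-1}$ with $\beta>0$, $\tau_i\ge 0$ for all $i$, $P\succ 0$, and $$\begin{bmatrix} P-\beta I & 0 & 0 & 0\\ 0 & -P & -Y^\top & 0\\ 0 & -Y & 0 & Y\\ 0 & 0 & Y^\top & P\end{bmatrix}-\sum_{i=0}^{T-1}\tau_i\begin{bmatrix} I & x(i+1)\\ 0 & -x(i)\\ 0 & -u(i)\\ 0 & 0\end{bmatrix}\begin{bmatrix}\epsilon I & 0\\ 0 & -1\end{bmatrix}\begin{bmatrix} I & x(i+1)\\ 0 & -x(i)\\ 0 & -u(i)\\ 0 & 0\end{bmatrix}^\top\succeq 0.$$ Then there exist a symmetric $P\succ 0$ and $K\in\mathbb{R}^{m\times n}$ such that $(A+BK)P(A+BK)^\top-P\prec 0$ for all $(A,B)\in\mathcal{I}$.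
   Context: $\succ$ ($\succeq$) and $\prec$ ($\preceq$) denote positive (semi)definiteness and negative (semi)definiteness of symmetric matrices. In the displayed block matrices, the block rows/columns have sizes $n,n,m,n$ (first matrix) and the $4\times 2$ block matrices have row-block sizes $n,n,m,n$ and column-block sizes $n,1$; the zero blocks and identity blocks have compatible dimensions. *)

(* Defs.v *)
From mathcomp Require Import all_boot all_order all_algebra.
Set Implicit Arguments. Unset Strict Implicit. Unset Printing Implicit Defensive.
Import Order.TTheory GRing.Theory Num.Theory.
Local Open Scope ring_scope.

Definition psd {R : realFieldType} {k : nat} (M : 'M[R]_k) : Prop :=
  M^T = M /\ forall v : 'rV[R]_k, 0 <= (v *m M *m v^T) 0 0.

Definition pd {R : realFieldType} {k : nat} (M : 'M[R]_k) : Prop :=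
  M^T = M /\ forall v : 'rV[R]_k, v != 0 -> 0 < (v *m M *m v^T) 0 0.

Definition nd {R : realFieldType} {k : nat} (M : 'M[R]_k) : Prop := pd (- M).

Definition loewner_le {R : realFieldType} {k : nat} (A B : 'M[R]_k) : Prop :=
  psd (B - A).

Definition consistent {R : realFieldType} {n m : nat} (eps : R)
  (xi xi1 : 'cV[R]_n) (ui : 'cV[R]_m) (A : 'M[R]_n) (B : 'M[R]_(n, m)) : Prop :=
  exists d : 'cV[R]_n, xi1 = A *m xi + B *m ui + d /\ loewner_le (d *m d^T) (eps%:M).

Definition lmi_base {R : realFieldType} {n m : nat} (beta : R)
  (P : 'M[R]_n) (Y : 'M[R]_(m, n)) : 'M[R]_(n + n + m + n) :=
  block_mx
    (block_mx
       (block_mx (P - beta%:M) 0 0 (- P))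
       (col_mx 0 (- Y^T))
       (row_mx 0 (- Y))
       0)
    (col_mx (col_mx 0 0) Y)
    (row_mx (row_mx 0 0) Y^T)
    P.

Definition data_mx {R : realFieldType} {n m : nat}
  (xi xi1 : 'cV[R]_n) (ui : 'cV[R]_m) : 'M[R]_(n + n + m + n, n + 1) :=
  col_mx (col_mx (col_mx (row_mx 1%:M xi1) (row_mx 0 (- xi)))
                 (row_mx 0 (- ui)))
         (row_mx 0 0).

Definition noise_mx {R : realFieldType} {n : nat} (eps : R) : 'M[R]_(n + 1) :=
  block_mx (eps%:M) 0 0 (-1)%:M.

(* Main.v *)
Require Import Defs.
From mathcomp Require Import all_boot all_order all_algebra.
From mathcomp Require Import ring lra.
Import Order.TTheory GRing.Theory Num.Theory.
Local Open Scope ring_scope.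

Lemma pd_unit (R : realFieldType) k (P : 'M[R]_k) : pd P -> P \in unitmx.
Proof.
move=> [_ H]; rewrite unitmxE unitfE; apply/negP => /det0P [v v0 vP].
by move: (H v v0); rewrite vP mul0mx mxE ltxx.
Qed.

Lemma sq_pos (R : realFieldType) k (a : 'rV[R]_k) : a != 0 -> 0 < (a *m a^T) 0 0.
Proof.
move=> a0; have [j aj] : exists j, a 0 j != 0.
  apply/existsP; apply: contraR a0 => /existsPn H; apply/eqP/matrixP => i j.
  by rewrite !mxE (ord1 i); move/negPn: (H j) => /eqP ->.
rewrite mxE (bigD1 j) //= ltr_pwDl //.
  by rewrite mxE -expr2 lt_def sqrf_eq0 aj sqr_ge0.
by apply: sumr_ge0 => i _; rewrite mxE -expr2 sqr_ge0.
Qed.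

Lemma lmi_quad (R : realFieldType) n m (beta : R) P (Y : 'M[R]_(m,n)) (a b : 'rV[R]_n) (c : 'rV[R]_m) (e : 'rV[R]_n) :
  row_mx (row_mx (row_mx a b) c) e *m lmi_base beta P Y *m (row_mx (row_mx (row_mx a b) c) e)^T =
  a *m P *m a^T - a *m beta%:M *m a^T - b *m P *m b^T - c *m Y *m b^T -
  b *m Y^T *m c^T + e *m Y^T *m c^T + (c *m Y *m e^T + e *m P *m e^T).
Proof.
rewrite /lmi_base !(mul_row_block, mul_row_col, tr_row_mx, mul_mx_row,  mulmx0, mul0mx, add0r, addr0, add_row_mx, mulmxN, mulNmx, mulmxDl, mulmxDr, mulmxBl, mulmxBr, mulmxA).
by [].
Qed.

Lemma data_quad (R : realFieldType) n m (eps : R) (xi xi1 : 'cV[R]_n) (ui : 'cV[R]_m) (a b : 'rV[R]_n) (c : 'rV[R]_m) (e : 'rV[R]_n) :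
  row_mx (row_mx (row_mx a b) c) e *m (data_mx xi xi1 ui *m noise_mx eps *m (data_mx xi xi1 ui)^T) *m (row_mx (row_mx (row_mx a b) c) e)^T =
  eps *: (a *m a^T) - (a *m xi1 - b *m xi - c *m ui) *m (a *m xi1 - b *m xi - c *m ui)^T.
Proof.
rewrite /data_mx /noise_mx !mulmxA -(mulmxA _ (col_mx _ _)^T) -trmx_mul.
rewrite !(mul_row_block, mul_row_col, tr_row_mx, mul_mx_row,  mulmx0, mul0mx, add0r, addr0, add_row_mx).
rewrite !mulmx1 !mul_mx_scalar scaleN1r mulNmx -scalemxAl !mulmxN.
by [].
Qed.

Section E.
Variable R : realFieldType.
Lemma e00D (X Y : 'M[R]_1) : (X + Y) 0 0 = X 0 0 + Y 0 0. Proof. by rewrite mxE. Qed.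
Lemma e00N (X : 'M[R]_1) : (- X) 0 0 = - X 0 0. Proof. by rewrite mxE. Qed.
Lemma e00Z k (X : 'M[R]_1) : (k *: X) 0 0 = k * X 0 0. Proof. by rewrite mxE. Qed.
Lemma m1P (X Y : 'M[R]_1) : X 0 0 = Y 0 0 -> X = Y.
Proof. by move=> h; apply/matrixP => i j; rewrite (ord1 i) (ord1 j). Qed.
Lemma trD p q (X Y : 'M[R]_(p,q)) : (X + Y)^T = X^T + Y^T. Proof. exact: linearD. Qed.
Lemma trN p q (X : 'M[R]_(p,q)) : (- X)^T = - X^T. Proof. exact: linearN. Qed.

Lemma final_id n m (a : 'rV[R]_n) A (B : 'M[R]_(n,m)) K P beta : P^T = P ->
  (a *m - ((A + B *m K) *m P *m (A + B *m K)^T - P) *m a^T) 0 0 =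
  (a *m P *m a^T - a *m beta%:M *m a^T - a *m A *m P *m (a *m A)^T -
   a *m B *m (K *m P) *m (a *m A)^T - a *m A *m (K *m P)^T *m 
   (a *m B)^T + - (a *m B *m K) *m (K *m P)^T *m (a *m B)^T +
   (a *m B *m (K *m P) *m (- (a *m B *m K))^T +
    - (a *m B *m K) *m P *m (- (a *m B *m K))^T)) 0 0 + beta * (a *m a^T) 0 0.
Proof.
move=> Psym.
rewrite !trN !trD !trmx_mul Psym ?trmxK.
rewrite !(mulmxDr, mulmxDl, mulmxBr, mulmxBl, mulmxN, mulNmx, mul_mx_scalar, mulmxA, opprK).
rewrite -!scalemxAl.
rewrite !(e00D, e00N, e00Z).
ring.
Qed.
End E.

Theorem proposition1 (R : realFieldType) (n m T : nat)
  (hn : (0 < n)%N) (hm : (0 < m)%N) (hT : (0 < T)%N)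
  (eps : R) (heps : 0 <= eps)
  (x : nat -> 'cV[R]_n) (u : nat -> 'cV[R]_m) :
  (exists (P : 'M[R]_n) (Y : 'M[R]_(m, n)) (beta : R) (tau : nat -> R),
      P^T = P /\ 0 < beta /\ (forall i, (i < T)%N -> 0 <= tau i) /\ pd P /\
      psd (lmi_base beta P Y -
           \sum_(0 <= i < T) tau i *: (data_mx (x i) (x i.+1) (u i)
                                        *m noise_mx eps
                                        *m (data_mx (x i) (x i.+1) (u i))^T))) ->
  exists (P : 'M[R]_n) (K : 'M[R]_(m, n)),
    P^T = P /\ pd P /\
    forall (A : 'M[R]_n) (B : 'M[R]_(n, m)),
      (forall i, (i < T)%N -> consistent eps (x i) (x i.+1) (u i) A B) ->
      nd ((A + B *m K) *m P *m (A + B *m K)^T - P).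
Proof.
move=> [P [Y [beta [tau [Psym [bpos [taupos [Ppd [_ Hpsd]]]]]]]]].
have Pu := @pd_unit _ _ _ Ppd.
pose K := Y *m invmx P.
have YK : Y = K *m P by rewrite /K mulmxKV.
clearbody K.
exists P, K; split => //; split => //.
move=> A B HC; split.
  by rewrite !linearN !linearB /= !trmx_mul !trmxK Psym mulmxA.
move=> a a0.
have H := Hpsd (row_mx (row_mx (row_mx a (a *m A)) (a *m B)) (- (a *m B *m K))).
rewrite mulmxBr mulmxBl lmi_quad mulmx_sumr mulmx_suml in H.
move: H; under eq_bigr => i _ do rewrite -scalemxAr -scalemxAl data_quad.
rewrite e00D e00N summxE => H.
have Hs : 0 <= \sum_(0 <= i < T)
   (tau i *: (eps *: (a *m a^T) - (a *m x i.+1 - a *m A *m x i - a *m B *m u i) *m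
                (a *m x i.+1 - a *m A *m x i - a *m B *m u i)^T)) 0 0.
  rewrite big_nat_cond; apply: sumr_ge0 => i /andP [/andP [_ hi] _].
  have [d [hx [_ hd]]] := HC i hi.
  rewrite e00Z mulr_ge0 ?taupos //.
  have -> : a *m x i.+1 - a *m A *m x i - a *m B *m u i = a *m d.
    apply: m1P; rewrite hx !mulmxDr !mulmxA !e00D !e00N; lra.
  move: (hd a); congr (_ <= _).
  rewrite mulmxBr mulmxBl mul_mx_scalar -scalemxAl trmx_mul !mulmxA.
  by [].
have Hb := @sq_pos _ _ a a0.
have Hbe : 0 < beta * (a *m a^T) 0 0 by apply: mulr_gt0.
move: H Hs Hbe. rewrite YK.
move: (\sum_(0 <= i < T) _) => S H Hs Hbe.
rewrite (@final_id _ _ _ _ _ _ _ _ beta) //; lra.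
Qed.
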